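(* Let $k\ge3$, let $G=(V,E)$ be a $k$-uniform hypergraph with connected components $V_1,\dots,V_s$ ($s\ge1$), and let $\mathbf x\in\mathbb C^n$ be an eigenvector of the Laplacian tensor $\mathcal D-\mathcal A$ (respectively, of the signless Laplacian tensor $\mathcal D+\mathcal A$) corresponding to the eigenvalue $0$. Then for every $i\in[s]$ with $\mathbf x(V_i)\neq0$: (a) $\mathbf x(V_i)$ is an eigenvector of the sub-tensor $(\mathcal D-\mathcal A)(V_i)$ (respectively $(\mathcal D+\mathcal A)(V_i)$) corresponding to the eigenvalue $0$; (b) $\mathrm{sup}(\mathbf x(V_i))=V_i$; and (c) there exist $\gamma_i\in\mathbb C\setminus\{0\}$ and nonnegative integers $\alpha_j$ ($j\in V_i$) such that $x_j=\gamma_i\exp\!\big(\tfrac{2\alpha_j\pi}{k}\sqrt{-1}\big)$ for all $j\in V_i$.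
   Context: A $k$-uniform hypergraph $G=(V,E)$ has vertex set $V=[n]$ ($n\ge k$) and a nonempty edge set $E$ of $k$-element subsets of $V$; $E_i=\{e\in E:i\in e\}$, $d_i=|E_i|$. Two distinct vertices are connected if there is a sequence of edges $e_1,\dots,e_m$ with $i\in e_1$, $j\in e_m$, $e_r\cap e_{r+1}\ne\emptyset$. A connected component is a maximal set of pairwise connected vertices; an isolated vertex (degree $0$, a singleton) is also a connected component, so the components partition $V$. The adjacency tensor $\mathcal A$ has $a_{i_1\dots i_k}=\frac1{(k-1)!}$ if $\{i_1,\dots,i_k\}\in E$, else $0$; $\mathcal D$ is diagonal with $d_{i\dots i}=d_i$. Thus $((\mathcal D\pm\mathcal A)\mathbf x^{k-1})_i=d_ix_i^{k-1}\pm\sum_{e\in E_i}\prod_{j\in e\setminus\{i\}}x_j$. $\lambda$ is an eigenvalue of a tensor $\mathcal T$ with eigenvector $\mathbf x\in\mathbb C^n\setminus\{0\}$ if $(\mathcal T\mathbf x^{k-1})_i=\lambda x_i^{k-1}$ for all $i$. For $S=\{j_1,\dots,j_m\}\subseteq[n]$, the sub-tensor $\mathcal T(S)$ is the order-$k$ dimension-$m$ tensor with entries $t_{j_{i_1}\dots j_{i_k}}$, and $\mathbf x(S)$ is the subvector $(x_j)_{j\in S}$. $\mathrm{sup}(\mathbf x)=\{i: x_i\ne0\}$. *)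

(* Defs.v *)
(* Complex field: an arbitrary numClosedFieldType C. *)
From HB Require Import structures.
From mathcomp Require Import all_boot all_order all_algebra.
Set Implicit Arguments. Unset Strict Implicit. Unset Printing Implicit Defensive.
Import Order.TTheory GRing.Theory Num.Theory.
Local Open Scope ring_scope.

Section Hyper.
Variables (C : numClosedFieldType) (n k : nat).

(* An order-k, dimension-n tensor: t_{i i_2 ... i_k} = T i [:: i_2; ...; i_k]. *)
Definition tensor := 'I_n -> (k.-1).-tuple 'I_n -> C.

Definition tapply (T : tensor) (x : 'I_n -> C) (i : 'I_n) : C :=
  \sum_(t : (k.-1).-tuple 'I_n) T i t * \prod_(j <- t) x j.

Definition eigenpair (T : tensor) (lam : C) (x : 'I_n -> C) : Prop :=
  (exists i, x i != 0) /\ forall i, tapply T x i = lam * x i ^+ k.-1.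

Variable E : {set {set 'I_n}}.

Definition deg (i : 'I_n) : nat := #|[set e in E | i \in e]|.

Definition adj_tensor : tensor := fun i t =>
  if [set j in i :: t] \in E then ((k.-1)`!)%:R^-1 else 0.

Definition deg_tensor : tensor := fun i t =>
  if all (fun j => j == i) t then (deg i)%:R else 0.

Definition lap_tensor (signless : bool) : tensor := fun i t =>
  if signless then deg_tensor i t + adj_tensor i t
  else deg_tensor i t - adj_tensor i t.

Definition hconnected (i j : 'I_n) : Prop :=
  exists (e0 : {set 'I_n}) (s : seq {set 'I_n}),
    [/\ all (fun e => e \in E) (e0 :: s), i \in e0, j \in last e0 s &
        path (fun a b => a :&: b != set0) e0 s].

Definition pairwise_connected (S : {set 'I_n}) : Prop :=
  forall i j, i \in S -> j \in S -> i != j -> hconnected i j.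

Definition is_component (S : {set 'I_n}) : Prop :=
  [/\ S != set0, pairwise_connected S &
      forall S' : {set 'I_n}, S \subset S' -> pairwise_connected S' -> S' = S].

End Hyper.

(* sub-tensor T(S) and subvector x(S), indexing S by its increasing enumeration *)
Definition subtensor (C : numClosedFieldType) (n k : nat) (S : {set 'I_n})
  (T : tensor C n k) : tensor C #|S| k :=
  fun i t => T (enum_val i) (map_tuple (fun j => enum_val j) t).

Definition subvec (C : numClosedFieldType) (n : nat) (S : {set 'I_n})
  (x : 'I_n -> C) : 'I_#|S| -> C := fun i => x (enum_val i).

Definition sup (C : numClosedFieldType) (m : nat) (x : 'I_m -> C) : {set 'I_m} :=
  [set i | x i != 0].

(* Main.v *)
Require Import Defs.
From HB Require Import structures.
From mathcomp Require Import all_boot all_order all_algebra.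
From mathcomp Require Import all_fingroup all_solvable all_field.
From mathcomp Require Import ring zify.
Set Implicit Arguments. Unset Strict Implicit. Unset Printing Implicit Defensive.
Import Order.TTheory GRing.Theory Num.Theory.
Local Open Scope ring_scope.

Lemma prim_root_ex (C : numClosedFieldType) n : (n > 0)%N -> exists z : C, n.-primitive_root z.
Proof.
move=> n_gt0.
pose p : {poly C} := 'X^n - 1; have [r Dp] := closed_field_poly_normal p.
rewrite (monicP _) ?monicXnsubC // scale1r in Dp.
have rn1: all n.-unity_root r by apply/allP=> z; rewrite -root_prod_XsubC -Dp.
have sz_r: (n < (size r).+1)%N.
  by rewrite -(size_prod_XsubC r id) -Dp size_XnsubC.
have [|z] := hasP (has_prim_root n_gt0 rn1 _ sz_r); last by exists z.
by rewrite -separable_prod_XsubC -Dp separable_Xn_sub_1 // pnatr_eq0 -lt0n.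
Qed.

Lemma geom_sum0 (C : numClosedFieldType) (q : C) r : q ^+ r = 1 -> q != 1 ->
  \sum_(j < r) q ^+ j = 0.
Proof.
move=> qr q1; have := subrX1 q r; rewrite qr subrr => /esym/eqP.
by rewrite mulf_eq0 subr_eq0 (negbTE q1) => /eqP.
Qed.

Lemma unit_conj (C : numClosedFieldType) (y : C) : `|y| = 1 -> y^* = y^-1.
Proof.
move=> ny; have : y * y^* = 1 by rewrite -normCK ny expr1n.
move=> h; have y0 : y != 0 by apply: contraTneq isT => y0; move: h; rewrite y0 mul0r => /eqP; rewrite eq_sym oner_eq0.
by apply: (mulfI y0); rewrite h mulfV.
Qed.

Lemma norm1B_sq (C : numClosedFieldType) (y : C) : `|y| = 1 ->
  `|1 - y| ^+ 2 = 2 - 2 * 'Re y.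
Proof.
move=> ny; rewrite normCK ReE rmorphB rmorph1.
have : y * y^* = 1 by rewrite -normCK ny expr1n.
move=> h; rewrite mulrCA mulfV ?pnatr_eq0 // mulr1.
transitivity (1 - y - y^* + y * y^*); first ring. rewrite h; ring.
Qed.

Lemma norm_root1 (C : numClosedFieldType) (z w : C) r : (0 < r)%N -> z ^+ r = w -> `|w| = 1 -> `|z| = 1.
Proof.
move=> r0 zr nw; apply/eqP; rewrite -(pexpr_eq1 r0) ?normr_ge0 // -normrX zr nw //.
Qed.

Lemma fejer (C : numClosedFieldType) (w : C) r : `|w| = 1 -> w != 1 -> (1 < r)%N ->
  exists y, y ^+ r = w /\ 'Re w < 'Re y.
Proof.
move=> nw w1 r1; have r0 : (0 < r)%N by apply: ltnW.
have [xi pxi] := prim_root_ex C r0.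
set y0 := r.-root w; have y0r : y0 ^+ r = w by rewrite rootCK.
have ny0 : `|y0| = 1 := norm_root1 r0 y0r nw.
have xir : xi ^+ r = 1 := prim_expr_order pxi.
have nxi : `|xi| = 1 := norm_root1 r0 xir (normr1 _).
have xi0 : xi != 0 by apply/eqP => e; move: nxi; rewrite e normr0 => /eqP; rewrite eq_sym oner_eq0.
have y00 : y0 != 0 by apply/eqP => e; move: ny0; rewrite e normr0 => /eqP; rewrite eq_sym oner_eq0.
pose y (j : nat) := y0 * xi ^+ j.
have yr j : y j ^+ r = w by rewrite /y exprMn y0r -exprM mulnC exprM xir expr1n mulr1.
have ny j : `|y j| = 1 by rewrite /y normrM normrX nxi expr1n mulr1.
case: (boolP [exists j : 'I_r, 'Re w < 'Re (y j)]) => [/existsP [j hj]|]; first by exists (y j).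
rewrite negb_exists => /forallP H.
have H' (j : 'I_r) : 'Re (y (nat_of_ord j)) <= 'Re w.
  by have := H j; rewrite real_ltNge ?Creal_Re // negbK.
pose S (j : nat) := \sum_(a < r) y j ^+ a.
have D0 : 0 < `|1 - w| by rewrite normr_gt0 subr_eq0 eq_sym.
have hS (j : 'I_r) : `|S j| <= 1.
  have e1 : `|1 - y j| * `|S j| = `|1 - w|.
    by rewrite -normrM -opprB mulNr -subrX1 yr opprB.
  have le1 : `|1 - w| <= `|1 - y j|.
    rewrite -(ler_pXn2r (isT : (0 < 2)%N)) ?nnegrE ?normr_ge0 //.
    by rewrite !norm1B_sq // lerD2l lerN2 ler_pM2l ?ltr0n.
  have p0 : 0 < `|1 - y j| by apply: lt_le_trans le1.
  by rewrite -(ler_pM2l p0) mulr1 e1.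
have Hle : \sum_(j < r) `|S j| ^+ 2 <= r%:R.
  have -> : (r%:R : C) = \sum_(j < r) 1 by rewrite sumr_const card_ord.
  apply: ler_sum => j _.
  by rewrite -(expr1n _ 2) lerXn2r ?nnegrE ?normr_ge0 ?hS.
have Heq : \sum_(j < r) `|S j| ^+ 2 = r%:R * r%:R.
  have e1 (j : 'I_r) : `|S j| ^+ 2 = \sum_(a < r) \sum_(b < r)
       (y0 ^+ a * y0^-1 ^+ b) * (xi ^+ a * xi^-1 ^+ b) ^+ j.
    rewrite normCK /S rmorph_sum mulr_suml; apply: eq_bigr => a _.
    rewrite mulr_sumr; apply: eq_bigr => b _.
    rewrite rmorphXn /= (unit_conj (ny j)) /y invfM -exprVn !exprMn -!exprM.
    rewrite [(j * a)%N]mulnC [(j * b)%N]mulnC !exprM; ring.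
  rewrite (eq_bigr _ (fun j _ => e1 j)) exchange_big /=.
  have -> : (r%:R * r%:R : C) = \sum_(a < r) (r%:R : C) by rewrite sumr_const card_ord mulr_natl.
  apply: eq_bigr => a _.
  rewrite exchange_big (bigD1 a) //= [X in _ + X]big1 ?addr0.
    have c1 : y0 ^+ a * y0^-1 ^+ a = 1 by rewrite exprVn mulfV // expf_neq0.
    have c2 : xi ^+ a * xi^-1 ^+ a = 1 by rewrite exprVn mulfV // expf_neq0.
    rewrite c1 c2; under eq_bigr do rewrite expr1n mul1r; by rewrite sumr_const card_ord.
  move=> b ba; rewrite -mulr_sumr geom_sum0 ?mulr0 //.
    by rewrite exprMn -!exprM [(a * r)%N]mulnC [(b * r)%N]mulnC !exprM exprVn xir invr1 !expr1n mulr1.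
  apply/eqP => h; move/eqP: ba; apply; apply/val_inj => /=.
  rewrite exprVn in h; have := divr1_eq h => /eqP.
  rewrite (eq_prim_root_expr pxi) !modn_small ?ltn_ord // => /eqP ->.
  done.
move: Hle; rewrite Heq -natrM ler_nat => hh; have : (2 * r <= r * r)%N by rewrite leq_mul2r r1 orbT.
move: hh r0; clear; lia.
Qed.

Lemma rootN1_prim (C : numClosedFieldType) k : (0 < k)%N ->
  k.-primitive_root ((k.-root (-1 : C)) ^+ 2).
Proof.
move=> k0; set W := k.-root (-1 : C).
have Wk : W ^+ k = -1 by rewrite rootCK.
have nW : `|W| = 1 by apply: (norm_root1 k0 Wk); rewrite normrN1.
have m1 : (-1 : C) != 1 by rewrite lt_eqF // (lt_trans (ltrN10 C) ltr01).
have W1 : W != 1 by apply: contraNneq m1 => e; rewrite -Wk e expr1n.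
have W2k : (W ^+ 2) ^+ k = 1 by rewrite -exprM mulnC exprM Wk sqrrN expr1n.
have [m pm mk] := prim_order_exists k0 W2k.
have m0 : (0 < m)%N := prim_order_gt0 pm.
case: (eqVneq m k) pm => [-> //|mlt pm].
exfalso.
have W2m : (W ^+ m) ^+ 2 = 1 by rewrite -exprM mulnC exprM (prim_expr_order pm).
have Wm : W ^+ m = -1.
  move/eqP: W2m; rewrite sqrf_eq1 => /orP [/eqP e|/eqP //].
  case/dvdnP: mk => q kq; move: Wk; rewrite kq mulnC exprM e expr1n => e'.
  by move: m1; rewrite -e' eqxx.
case/dvdnP: mk => r kr.
have r1 : (1 < r)%N.
  case: r kr => [|[|r]] kr //; first by move: k0; rewrite kr.
  by move: mlt; rewrite kr mul1n eqxx.
have [y [yr Rey]] := fejer nW W1 r1.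
have yk : y ^+ k = -1 by rewrite kr exprM yr Wm.
have := Rey; rewrite real_ltNge ?Creal_Re // => /negP; apply.
case/orP: (real_leVge (Creal_Im y) (real0 _)) => Iy.
- rewrite -Re_conj; apply: rootC_Re_max k0 _ _.
    by rewrite -rmorphXn /= yk rmorphN rmorph1.
  by rewrite Im_conj oppr_ge0.
- by apply: rootC_Re_max k0 yk Iy.
Qed.

Lemma hconn_edge n (E : {set {set 'I_n}}) e u v : e \in E -> u \in e -> v \in e ->
  hconnected E u v.
Proof. by move=> eE ue ve; exists e, [::]; split => //=; rewrite eE. Qed.

Lemma hconn_trans n (E : {set {set 'I_n}}) u a v :
  hconnected E u a -> hconnected E a v -> hconnected E u v.
Proof.
move=> [e0 [s [h1 h2 h3 h4]]] [f0 [t [g1 g2 g3 g4]]].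
exists e0, (s ++ f0 :: t); split.
- by rewrite -cat_cons all_cat h1 g1.
- by [].
- by rewrite last_cat.
- rewrite cat_path h4 /= g4 andbT; apply/set0Pn; exists a; rewrite inE h3 g2.
  done.
Qed.

Lemma hconn_sym n (E : {set {set 'I_n}}) u v :
  hconnected E u v -> hconnected E v u.
Proof.
move=> [e0 [s [h1 h2 h3 h4]]].
exists (last e0 s), (rev (belast e0 s)); split.
- have -> : last e0 s :: rev (belast e0 s) = rev (e0 :: s) by rewrite (lastI e0 s) rev_rcons.
  by rewrite all_rev.
- by [].
- have : last (last e0 s) (rev (belast e0 s)) = e0.
    case: s {h1 h3 h4} => [|a s] //=.
    by rewrite rev_cons last_rcons.
  by move=> ->.
- rewrite rev_path; apply: sub_path h4 => a b /=; by rewrite setIC.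
Qed.

Lemma comp_closed n (E : {set {set 'I_n}}) S e a :
  is_component E S -> e \in E -> a \in e -> a \in S -> e \subset S.
Proof.
move=> [S0 pcS maxS] eE ae aS.
suff <- : S :|: e = S by apply: subsetUr.
apply: maxS; first exact: subsetUl.
have cS u : u \in S -> u != a -> hconnected E u a.
  by move=> uS ua; apply: pcS.
move=> u v; rewrite !inE => /orP [uS|ue] /orP [vS|ve] uv.
- exact: pcS.
- case: (eqVneq u a) => [->|ua]; first exact: hconn_edge eE ae ve.
  exact: hconn_trans (cS u uS ua) (hconn_edge eE ae ve).
- case: (eqVneq v a) => [->|va]; first exact: hconn_edge eE ue ae.
  exact: hconn_trans (hconn_edge eE ue ae) (hconn_sym (cS v vS va)).
- exact: hconn_edge eE ue ve.
Qed.

Lemma hconn_prop n (E : {set {set 'I_n}}) (Q : 'I_n -> Prop) i j :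
  (forall a e, Q a -> e \in E -> a \in e -> forall l, l \in e -> Q l) ->
  Q i -> hconnected E i j -> Q j.
Proof.
move=> step Qi [e0 [s [h1 h2 h3 h4]]].
elim: s e0 i Qi h1 h2 h3 h4 => [|f s IH] e0 i Qi /=.
  by rewrite andbT => eE ie je _; exact: step Qi eE ie j je.
move=> /andP [eE hall] ie js /andP [/set0Pn [a]]; rewrite inE => /andP [ae af] hp.
apply: (IH f a) => //; exact: step Qi eE ie a ae.
Qed.

Lemma tuple_char n k (e : {set 'I_n}) j (t : (k.-1).-tuple 'I_n) : (0 < k)%N ->
  j \in e -> #|e| = k ->
  ([set l in j :: t] == e) = all (mem (e :\ j)) t && uniq t.
Proof.
move=> k0 je ek; apply/idP/idP.
- move/eqP=> Et.
  have u : uniq (j :: t).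
    apply/card_uniqP; rewrite -cardsE Et ek /= size_tuple prednK //.
  move: u; rewrite cons_uniq => /andP [jt ut]; rewrite ut andbT.
  apply/allP => l lt; rewrite !inE; apply/andP; split.
    by apply: contraNneq jt => <-.
  by rewrite -Et inE in_cons lt orbT.
- move=> /andP [/allP al ut]; rewrite eqEcard; apply/andP; split.
    apply/subsetP => l; rewrite inE in_cons => /orP [/eqP->|lt] //.
    by have := al l lt; rewrite !inE => /andP [_ ->].
  have jt : j \notin t by apply/negP => /al; rewrite !inE eqxx.
  have u : uniq (j :: t) by rewrite cons_uniq jt ut.
  rewrite cardsE (card_uniqP u) ek /= size_tuple prednK //.
Qed.

Lemma tuple_prod (C : numClosedFieldType) n k (e : {set 'I_n}) j (t : (k.-1).-tuple 'I_n)
  (x : 'I_n -> C) : (0 < k)%N -> j \in e -> #|e| = k -> [set l in j :: t] == e ->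
  \prod_(l <- t) x l = \prod_(l in e :\ j) x l.
Proof.
move=> k0 je ek Et; have := Et; rewrite tuple_char // => /andP [/allP al ut].
rewrite -big_enum; apply: perm_big; apply: uniq_perm => //; first exact: enum_uniq.
move=> l; rewrite mem_enum; apply/idP/idP; first exact: al.
move=> lej; have := lej; rewrite !inE => /andP [lj le].
by move: le; rewrite -(eqP Et) inE in_cons (negbTE lj).
Qed.

Lemma tuple_count n k (e : {set 'I_n}) j : (0 < k)%N -> j \in e -> #|e| = k ->
  #|[pred t : (k.-1).-tuple 'I_n | [set l in j :: t] == e]| = (k.-1)`!.
Proof.
move=> k0 je ek.
rewrite (eq_card (B := [set t : (k.-1).-tuple 'I_n | all (mem (e :\ j)) t & uniq t])).
  rewrite card_uniq_tuples.
  have -> : #|mem (e :\ j)| = k.-1.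
    by have := cardsD1 j e; rewrite je ek add1n => ->.
  by have := ffact_fact (leqnn k.-1); rewrite subnn fact0 muln1.
by move=> t; rewrite !inE tuple_char.
Qed.

Lemma tapply_deg (C : numClosedFieldType) n k (E : {set {set 'I_n}}) x j :
  tapply (@deg_tensor C n k E) x j = (deg E j)%:R * x j ^+ k.-1.
Proof.
rewrite /tapply (bigD1 (nseq_tuple k.-1 j)) //= [X in _ + X]big1 ?addr0.
  rewrite /deg_tensor /=.
  have -> : all (fun l => l == j) (nseq k.-1 j) by apply: all_pred1_nseq.
  by rewrite big_nseq iter_mulr_1.
move=> t tn; rewrite /deg_tensor.
case: ifP => [al|]; last by rewrite mul0r.
exfalso; move/eqP: tn; apply; apply/val_inj => /=.
by have /all_pred1P := al; rewrite size_tuple.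
Qed.

Lemma tapply_adj (C : numClosedFieldType) n k (E : {set {set 'I_n}}) x j :
  (0 < k)%N -> (forall e, e \in E -> #|e| = k) ->
  tapply (@adj_tensor C n k E) x j = \sum_(e in [set e in E | j \in e]) \prod_(l in e :\ j) x l.
Proof.
move=> k0 hEk; rewrite /tapply.
pose c : C := ((k.-1)`!)%:R^-1.
transitivity (\sum_(t : (k.-1).-tuple 'I_n | [set l in j :: t] \in [set e in E | j \in e])
   c * \prod_(l <- t) x l).
  rewrite [RHS]big_mkcond; apply: eq_bigr => t _; rewrite /adj_tensor !inE eqxx /= andbT.
  by case: ifP; rewrite ?mul0r.
rewrite (partition_big (fun t : (k.-1).-tuple 'I_n => [set l in j :: t])
   (mem [set e in E | j \in e])) //=.
apply: eq_bigr => e He; have := He; rewrite inE => /andP [eE je].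
have ek := hEk e eE.
rewrite (eq_bigl (fun t : (k.-1).-tuple 'I_n => [set l in j :: t] == e)); last first.
  by move=> t; apply/andP/idP => [[]//|/eqP Et]; rewrite Et.
rewrite (eq_bigr (fun _ => c * \prod_(l in e :\ j) x l)); last first.
  by move=> t Et; rewrite (tuple_prod x k0 je ek Et).
rewrite sumr_const tuple_count // -mulr_natl mulrA /c mulfV ?mul1r //.
by rewrite pnatr_eq0 -lt0n fact_gt0.
Qed.

Definition adjsum (C : numClosedFieldType) n (E : {set {set 'I_n}}) (x : 'I_n -> C) j :=
  \sum_(e in [set e in E | j \in e]) \prod_(l in e :\ j) x l.

Lemma tapply_lap (C : numClosedFieldType) n k (E : {set {set 'I_n}}) s x j :
  (0 < k)%N -> (forall e, e \in E -> #|e| = k) ->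
  tapply (@lap_tensor C n k E s) x j =
  (deg E j)%:R * x j ^+ k.-1 + (if s then 1 else -1) * adjsum E x j.
Proof.
move=> k0 hEk; have hD := tapply_deg k E x j; have hA := tapply_adj x j k0 hEk.
rewrite /tapply in hD hA; rewrite /adjsum -hD -hA /tapply /lap_tensor.
case: s; rewrite ?mul1r ?mulN1r -?big_split -?sumrB; apply: eq_bigr => t _.
  by rewrite mulrDl.
by rewrite mulrBl.
Qed.

Lemma tapply_sub (C : numClosedFieldType) n k (S : {set 'I_n}) (T : tensor C n k) x
  (i : 'I_#|S|) :
  (forall t : (k.-1).-tuple 'I_n, ~~ all (mem S) t -> T (enum_val i) t = 0) ->
  tapply (@subtensor C n k S T) (@subvec C n S x) i = tapply T x (enum_val i).
Proof.
move=> hz; have Hi : enum_val i \in S := enum_valP i.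
rewrite /tapply; symmetry.
rewrite (bigID (fun t : (k.-1).-tuple 'I_n => all (mem S) t)) /= [X in _ + X]big1 ?addr0;
  last by move=> t /hz ->; rewrite mul0r.
rewrite (reindex_onto (fun t : (k.-1).-tuple 'I_#|S| => map_tuple (fun j => enum_val j) t)
   (fun t => map_tuple (enum_rank_in Hi) t)) /=.
  apply: eq_big => t.
    rewrite all_map; apply/andP; split.
      by apply/allP => l _ /=; exact: enum_valP.
    apply/eqP/val_inj => /=; rewrite -map_comp.
    by rewrite (eq_map (g := id)) ?map_id // => l /=; rewrite enum_valK_in.
  by move=> _; rewrite /subtensor /subvec big_map.
move=> t /allP al; apply/val_inj => /=; rewrite -map_comp.
transitivity (map id (tval t)); last exact: map_id.
by apply/eq_in_map => l /al lS /=; rewrite enum_rankK_in.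
Qed.

Lemma avg_eq (C : numClosedFieldType) (I : finType) (A : {set I}) (p : I -> C) u :
  (forall e, e \in A -> `|p e| <= `|u|) -> \sum_(e in A) p e = #|A|%:R * u ->
  forall e, e \in A -> p e = u.
Proof.
move=> hle hs.
have e1 e : `|p e - u| ^+ 2 = `|p e| ^+ 2 - (p e * u^* + u * (p e)^*) + `|u| ^+ 2.
  by rewrite !normCK rmorphB /=; ring.
have hsum : \sum_(e in A) `|p e - u| ^+ 2 = \sum_(e in A) `|p e| ^+ 2 - #|A|%:R * `|u| ^+ 2.
  rewrite (eq_bigr _ (fun e _ => e1 e)) big_split sumrB /= sumr_const.
  rewrite big_split /= -mulr_suml -mulr_sumr hs.
  have -> : \sum_(i in A) (p i)^* = (#|A|%:R * u)^* by rewrite -hs rmorph_sum.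
  rewrite rmorphM /= conjC_nat !normCK; rewrite -mulr_natl; ring.
have h0 : \sum_(e in A) `|p e - u| ^+ 2 = 0.
  apply/eqP; rewrite eq_le; apply/andP; split; last by apply: sumr_ge0 => e _; rewrite exprn_ge0.
  rewrite hsum subr_le0.
  have -> : #|A|%:R * `|u| ^+ 2 = \sum_(e in A) `|u| ^+ 2 by rewrite sumr_const mulr_natl.
  apply: ler_sum => e eA.
  by rewrite lerXn2r ?nnegrE ?normr_ge0 ?hle.
move=> e eA; have := psumr_eq0P (fun i _ => exprn_ge0 2 (normr_ge0 (p i - u))) h0 eA.
by move/eqP; rewrite expf_eq0 /= normr_eq0 subr_eq0 => /eqP.
Qed.

Lemma prod_norm_eq (C : numClosedFieldType) n (A : {set 'I_n}) (x : 'I_n -> C) M :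
  0 < M -> (forall l, l \in A -> `|x l| <= M) -> `|\prod_(l in A) x l| = M ^+ #|A| ->
  forall l, l \in A -> `|x l| = M.
Proof.
move=> M0 hle; rewrite normr_prod -prodr_const => hp l0 l0A.
case: (eqVneq `|x l0| M) => // ne; exfalso.
have lt0 : `|x l0| < M by rewrite lt_neqAle ne hle.
move: hp; rewrite (bigD1 l0) //= [in RHS](bigD1 l0) //= => hp.
have P2 : 0 < \prod_(i in A | i != l0) M by apply: prodr_gt0.
have P1 : \prod_(i in A | i != l0) `|x i| <= \prod_(i in A | i != l0) M.
  apply: ler_prod => i /andP [iA _]; rewrite normr_ge0 hle //.
have : `|x l0| * \prod_(i in A | i != l0) `|x i| < M * \prod_(i in A | i != l0) M.
  apply: (le_lt_trans (ler_wpM2l (normr_ge0 _) P1)).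
  by rewrite ltr_pM2r.
by rewrite -hp ltxx.
Qed.

Lemma sgn2 (C : numClosedFieldType) (s : bool) : (if s then 1 else -1 : C) * (if s then 1 else -1) = 1.
Proof. by case: s; rewrite ?mulr1 ?mulrNN ?mulr1. Qed.

Lemma norm_sgn (C : numClosedFieldType) (s : bool) : `|(if s then 1 else -1 : C)| = 1.
Proof. by case: s; rewrite ?normr1 ?normrN1. Qed.

Lemma key (C : numClosedFieldType) n k (E : {set {set 'I_n}}) s (x : 'I_n -> C)
  (k0 : (0 < k)%N) (hEk : forall e, e \in E -> #|e| = k)
  (heig : forall i, tapply (@lap_tensor C n k E s) x i = 0 * x i ^+ k.-1)
  S (hS : is_component E S) M (M0 : 0 < M) (hM : forall l, l \in S -> `|x l| <= M)
  j (jS : j \in S) (xj : `|x j| = M) e (eE : e \in E) (je : j \in e) :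
  (forall l, l \in e -> `|x l| = M) /\
  \prod_(l in e) x l = - (if s then 1 else -1) * x j ^+ k.
Proof.
set sg : C := if s then 1 else -1.
set u := - sg * x j ^+ k.-1.
have hA : adjsum E x j = (deg E j)%:R * u.
  have h : (deg E j)%:R * x j ^+ k.-1 + sg * adjsum E x j = 0.
    by rewrite -tapply_lap // heig mul0r.
  have h2 : sg * adjsum E x j = - ((deg E j)%:R * x j ^+ k.-1).
    by apply/eqP; rewrite -addr_eq0 addrC h.
  transitivity (sg * (sg * adjsum E x j)); first by rewrite mulrA sgn2 mul1r.
  rewrite h2 /u; ring.
have nu : `|u| = M ^+ k.-1 by rewrite /u normrM normrN norm_sgn mul1r normrX xj.
have cD e' : e' \in E -> j \in e' -> #|e' :\ j| = k.-1.
  by move=> e'E je'; have := cardsD1 j e'; rewrite je' (hEk e' e'E) add1n => ->.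
have hP : forall e', e' \in [set e in E | j \in e] -> `|\prod_(l in e' :\ j) x l| <= `|u|.
  move=> e'; rewrite inE => /andP [e'E je']; rewrite nu normr_prod -(cD e' e'E je') -prodr_const.
  apply: ler_prod => l; rewrite !inE => /andP [_ le']; rewrite normr_ge0 /=.
  apply: hM; have := comp_closed hS e'E je' jS; move/subsetP; apply; exact: le'.
have eA : e \in [set e in E | j \in e] by rewrite inE eE je.
have Pe := avg_eq hP hA eA.
have hl : forall l, l \in e :\ j -> `|x l| = M.
  apply: prod_norm_eq => //.
    move=> l; rewrite !inE => /andP [_ le]; apply: hM.
    by have := comp_closed hS eE je jS; move/subsetP; apply.
  by rewrite Pe nu cD.
split.
  move=> l le; case: (eqVneq l j) => [->|lj] //; apply: hl; by rewrite !inE lj.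
rewrite (bigD1 j) //= (eq_bigl (fun l => l \in e :\ j)); last first.
  by move=> l; rewrite !inE andbC.
rewrite Pe /u -{2}(prednK k0) exprS; ring.
Qed.

Lemma key2 (C : numClosedFieldType) n k (E : {set {set 'I_n}}) s (x : 'I_n -> C)
  (k0 : (0 < k)%N) (hEk : forall e, e \in E -> #|e| = k)
  (heig : forall i, tapply (@lap_tensor C n k E s) x i = 0 * x i ^+ k.-1)
  S (hS : is_component E S) M (M0 : 0 < M) (hM : forall l, l \in S -> `|x l| <= M)
  j (jS : j \in S) (xj : `|x j| = M) e (eE : e \in E) (je : j \in e) l (le : l \in e) :
  l \in S /\ `|x l| = M /\ x l ^+ k = x j ^+ k.
Proof.
have [h1 h2] := key k0 hEk heig hS M0 hM jS xj eE je.
have lS : l \in S by have := comp_closed hS eE je jS; move/subsetP; apply.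
have [_ h3] := key k0 hEk heig hS M0 hM lS (h1 l le) eE le.
split => //; split; first exact: h1.
have sg0 : - (if s then 1 else -1 : C) != 0 by case: ifP => _; rewrite ?opprK ?oppr_eq0 ?oner_eq0.
by apply: (mulfI sg0); rewrite -h3 -h2.
Qed.

Lemma exists_max (C : numClosedFieldType) (T : eqType) (f : T -> C) (s : seq T) a :
  a \in s -> (forall t, f t \is Num.real) ->
  exists2 m, m \in s & forall t, t \in s -> f t <= f m.
Proof.
move=> ains hr; elim: s a ains => [//|b s IH] a _.
case: s IH => [|c s] IH.
  by exists b; rewrite ?mem_head // => t; rewrite inE => /eqP ->.
have [m ms hm] := IH c (mem_head _ _).
case/orP: (real_leVge (hr b) (hr m)) => hbm.
  exists m; first by rewrite inE ms orbT.
  by move=> t; rewrite inE => /orP [/eqP ->|/hm].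
exists b; first exact: mem_head.
move=> t; rewrite inE => /orP [/eqP -> //|/hm h]; exact: le_trans h hbm.
Qed.

Unset Implicit Arguments.

Theorem lemma4p1 (C : numClosedFieldType) (n k : nat) (E : {set {set 'I_n}})
  (hk : (3 <= k)%N) (hkn : (k <= n)%N) (hE0 : E != set0)
  (hEk : forall e, e \in E -> #|e| = k)
  (signless : bool) (x : 'I_n -> C)
  (hx : eigenpair (@lap_tensor C n k E signless) 0 x) :
  forall S : {set 'I_n}, is_component E S -> (exists j, @subvec C n S x j != 0) ->
    [/\ eigenpair (@subtensor C n k S (@lap_tensor C n k E signless)) 0 (@subvec C n S x),
        sup (@subvec C n S x) = [set: 'I_#|S|] &
        exists2 gamma : C, gamma != 0 &
          exists alpha : 'I_n -> nat, forall j, j \in S ->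
            x j = gamma * (k.-root (-1)) ^+ (2 * alpha j)].
Proof.
move=> S hS [j0 hj0].
have k0 : (0 < k)%N by apply: leq_trans hk.
have heig := hx.2.
have v0S : enum_val j0 \in S := enum_valP j0.
have v0e : enum_val j0 \in enum S by rewrite mem_enum.
have [jm jmS hjm] := @exists_max C _ (fun l => `|x l|) (enum S) (enum_val j0) v0e (fun t => normr_real (x t)).
have jmS' : jm \in S by rewrite -mem_enum.
set M := `|x jm|.
have hM : forall l, l \in S -> `|x l| <= M by move=> l lS; apply: hjm; rewrite mem_enum.
have M0 : 0 < M.
  apply: lt_le_trans (hM _ v0S); by rewrite normr_gt0.
pose Q l := l \in S /\ `|x l| = M /\ x l ^+ k = x jm ^+ k.
have step : forall a e, Q a -> e \in E -> a \in e -> forall l, l \in e -> Q l.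
  move=> a e [aS [xa xak]] eE ae l le.
  have [lS [xl xlk]] := key2 k0 hEk heig hS M0 hM aS xa eE ae le.
  by split => //; split => //; rewrite xlk.
have allQ : forall l, l \in S -> Q l.
  move=> l lS; case: (eqVneq l jm) => [->|ljm]; first by [].
  have [_ pcS _] := hS.
  have Qjm : Q jm by split => //.
  apply: (hconn_prop step Qjm); apply: pcS => //; by rewrite eq_sym.
have xjm0 : x jm != 0 by rewrite -normr_eq0 gt_eqF.
split.
- split; first by exists j0.
  move=> i; rewrite tapply_sub ?heig ?mul0r //.
  move=> t nall; rewrite /lap_tensor /deg_tensor /adj_tensor.
  have Hi := enum_valP i.
  have d0 : all (fun l => l == enum_val i) t = false.
    apply/negP => al; move/negP: nall; apply; apply: sub_all al => l /eqP ->; exact: Hi.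
  have a0 : ([set l in enum_val i :: t] \in E) = false.
    apply/negP => eE; move/negP: nall; apply.
    have im : enum_val i \in [set l in enum_val i :: t] by rewrite inE mem_head.
    have sub := comp_closed hS eE im Hi.
    apply/allP => l lt; move/subsetP: sub; apply; by rewrite inE in_cons lt orbT.
  by rewrite d0 a0; case: ifP => _; rewrite ?addr0 ?subr0.
- apply/setP => i; rewrite !inE /subvec.
  have [_ [xi _]] := allQ _ (enum_valP i).
  by rewrite -normr_eq0 xi gt_eqF.
- exists (x jm) => //.
  pose W := k.-root (-1 : C).
  exists (fun j => if [pick i : 'I_k | x j == x jm * W ^+ (2 * i)] is Some i then nat_of_ord i else 0%N).
  move=> j jS; case: pickP => [i /eqP //|none].
  exfalso; have [_ [_ xjk]] := allQ j jS.
  have hxk : (x j / x jm) ^+ k = 1 by rewrite exprMn exprVn xjk mulfV // expf_neq0.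
  have [i hi] := prim_rootP (rootN1_prim C k0) hxk.
  have := none i; rewrite exprM -hi mulrC divfK // eqxx.
  done.
Qed.
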